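(* Let $\Bbbk$ be a field of characteristic $\neq 2$ and let $A_1,\dots,A_m\in\Bbbk^{n\times n}$ be symmetric matrices. Then there do not exist $P\in\mathrm{GL}_n(\Bbbk)$, an integer $t\ge 2$ and positive integers $n_1,\dots,n_t$ with $\sum_j n_j=n$ such that every $P^TA_iP$ ($1\le i\le m$) is block diagonal with diagonal blocks of sizes $n_1,\dots,n_t$, if and only if the only matrices $X\in Z(A_1,\dots,A_m)$ with $X^2=X$ are $X=0$ and $X=I_n$.
   Context: The center of symmetric matrices $A_1,\dots,A_m\in\Bbbk^{n\times n}$ is $Z(A_1,\dots,A_m)=\{X\in\Bbbk^{n\times n} : (A_iX)^T=A_iX \text{ for all } 1\le i\le m\}$. *)

(* Defs.v *)
From HB Require Import structures.
From mathcomp Require Import all_boot all_order all_algebra.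
Set Implicit Arguments. Unset Strict Implicit. Unset Printing Implicit Defensive.
Import GRing.Theory.
Local Open Scope ring_scope.

(* Index (0-based) of the block containing row/column k, for the block
   partition of {0,...,n-1} into consecutive intervals of sizes s = [n_1;...;n_t]:
   the first j such that k < n_1 + ... + n_(j+1). *)
Definition block_of (s : seq nat) (k : nat) : nat :=
  find (fun j => (k < sumn (take j.+1 s))%N) (iota 0 (size s)).

Definition block_diag_sizes (F : fieldType) (n : nat) (s : seq nat)
  (M : 'M[F]_n) : Prop :=
  forall i j : 'I_n, block_of s i <> block_of s j -> M i j = 0.

Definition in_center (F : fieldType) (n m : nat) (A : 'I_m -> 'M[F]_n)
  (X : 'M[F]_n) : Prop :=
  forall i : 'I_m, (A i *m X)^T = A i *m X.

(* Main.v *)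
Require Import Defs.
From HB Require Import structures.
From mathcomp Require Import all_boot all_order all_algebra.
Import GRing.Theory.
Local Open Scope ring_scope.

Lemma entryE (F : fieldType) n (M N : 'M[F]_n) (a b : 'I_n) :
  (M^T *m N *m M) a b = ((col a M)^T *m N *m col b M) 0 0.
Proof.
rewrite tr_col -row_mul !mxE; apply: eq_bigr => j _; rewrite !mxE; apply: congr2 => //; apply: eq_bigr => k _; rewrite !mxE.
Qed.

Lemma block0 (s : seq nat) k : (0 < size s)%N ->
  (block_of s k == 0)%N = (k < head 0%N s)%N.
Proof.
case: s => //= a s _; rewrite /block_of /=.
rewrite take0 /= addn0; by case: ifP.
Qed.


Lemma unit_cast (F : fieldType) n k (e : k = n) (M : 'M[F]_(n, k)) :
  \rank M = n -> castmx (erefl n, e) M \in unitmx.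
Proof.
move=> hr; subst k; rewrite castmx_id -row_full_unit /row_full hr.
done.
Qed.

Lemma L2 (F : fieldType) n m (A : 'I_m -> 'M[F]_n) :
  (forall i, (A i)^T = A i) -> forall (P : 'M[F]_n) (s : seq nat),
  P \in unitmx -> (2 <= size s)%N -> all (fun k => 0 < k)%N s -> sumn s = n ->
  (forall i, block_diag_sizes s (P^T *m A i *m P)) ->
  exists X, [/\ in_center A X, X *m X = X, X <> 0 & X <> 1%:M].
Proof.
move=> Asym P s Pu hs hpos hsum hblk.
case: s hs hpos hsum hblk => [|n1 s'] //= hs /andP[hn1 hpos'] hsum hblk.
have hs' : (0 < sumn s')%N.
  case: s' hs hpos' {hsum hblk} => //= b s'' _ /andP[hb _]; exact: ltn_addr.
pose d := \row_(j < n) (if (j < n1)%N then 1 else 0 : F).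
pose D := diag_mx d.
have DD : D *m D = D.
  rewrite mulmx_diag; congr diag_mx; apply/matrixP => i j; rewrite !mxE.
  by case: ifP; rewrite ?mulr1 ?mulr0.
pose X := P *m D *m invmx P.
have PiP : invmx P *m P = 1%:M by rewrite mulVmx.
have PPi : P *m invmx P = 1%:M by rewrite mulmxV.
have DX : invmx P *m X *m P = D.
  by rewrite /X !mulmxA PiP mul1mx -mulmxA PiP mulmx1.
exists X; split.
- move=> i; set B := P^T *m A i *m P.
  have Bsym : B^T = B by rewrite /B !trmx_mul trmxK Asym mulmxA.
  have BD : (B *m D)^T = B *m D.
    have hB : block_diag_sizes (n1 :: s') B by exact: hblk.
    clearbody B.
    apply/matrixP => a b; rewrite mxE !mul_mx_diag !mxE.
    have -> : B b a = B a b by have := congr1 (fun M : 'M[F]_n => M a b) Bsym; rewrite mxE.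
    case ha: (a < n1)%N; case hb: (b < n1)%N => //.
    + rewrite hB ?mul0r ?mulr0 //.
      move=> e; have := block0 (n1 :: s') a isT; have := block0 (n1 :: s') b isT.
      by rewrite /= e ha hb => -> .
    + rewrite hB ?mul0r ?mulr0 //.
      move=> e; have := block0 (n1 :: s') a isT; have := block0 (n1 :: s') b isT.
      by rewrite /= e ha hb => -> .
  have AX : A i *m X = (invmx P)^T *m (B *m D) *m invmx P.
    rewrite /B /X !mulmxA -trmx_mul PPi trmx1 mul1mx.
    done.
  by rewrite AX -mulmxA trmx_mul trmx_mul BD trmxK mulmxA.
- by rewrite /X -!mulmxA (mulmxA (invmx P)) PiP mul1mx (mulmxA D) DD.
- have h0 : (0 < n)%N by rewrite -hsum; exact: ltn_addr.
  move=> X0; have : D = 0 by rewrite -DX X0 mulmx0 mul0mx.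
  move/matrixP => /(_ (Ordinal h0) (Ordinal h0)).
  rewrite !mxE /= hn1 /= mulr1n => /eqP; rewrite oner_eq0.
  done.
- have h1 : (n1 < n)%N by rewrite -hsum -{1}(addn0 n1) ltn_add2l.
  move=> X1; have : D = 1%:M by rewrite -DX X1 mulmx1 PiP.
  move/matrixP => /(_ (Ordinal h1) (Ordinal h1)).
  rewrite !mxE /= ltnn eqxx /= mulr1n => /eqP; rewrite eq_sym oner_eq0.
  done.
Qed.

Lemma idem_sub (F : fieldType) n k (u : 'M[F]_(k, n)) (Z : 'M[F]_n) :
  Z *m Z = Z -> (u <= Z)%MS -> u = u *m Z.
Proof. by move=> ZZ /submxP[D ->]; rewrite -mulmxA ZZ. Qed.

Lemma L1 (F : fieldType) n m (A : 'I_m -> 'M[F]_n) :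
  (forall i, (A i)^T = A i) -> forall X, in_center A X -> X *m X = X ->
  X <> 0 -> X <> 1%:M ->
  exists (P : 'M[F]_n) (s : seq nat),
        [/\ P \in unitmx, (2 <= size s)%N, all (fun k => 0 < k)%N s,
            sumn s = n &
            forall i : 'I_m, block_diag_sizes s (P^T *m A i *m P)].
Proof.
move=> Asym X hc XX X0 X1.
pose Y := X^T.
have YY : Y *m Y = Y by rewrite /Y -trmx_mul XX.
have ZZ : (1%:M - Y) *m (1%:M - Y) = 1%:M - Y.
  by rewrite mulmxBl !mulmxBr !mul1mx mulmx1 YY subrr subr0.
pose r := \rank Y; pose r' := \rank (1%:M - Y).
pose Q := col_mx (row_base Y) (row_base (1%:M - Y)).
have Qfull : row_full Q.
  rewrite -sub1mx -addsmxE.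
  have e : (1%:M : 'M[F]_n) = Y + (1%:M - Y) by rewrite addrC subrK.
  rewrite [X in (X <= _)%MS]e.
  by apply: addmx_sub_adds; rewrite eq_row_base ?submx_refl.
have hrr : (r + r' = n)%N.
  apply/eqP; rewrite eqn_leq; apply/andP; split.
    have : (1%:M - Y <= kermx Y)%MS.
      by apply/sub_kermxP; rewrite mulmxBl mul1mx YY subrr.
    move/mxrankS; rewrite mxrank_ker -/r' => h.
    rewrite -(subnKC (rank_leq_row Y)) leq_add2l; exact: h.
  move/eqnP: Qfull => <-; exact: rank_leq_row.
pose P := castmx (erefl n, hrr) Q^T.
exists P, [:: r; r']; split => //.
- by apply: unit_cast; rewrite mxrank_tr; apply/eqnP.
- rewrite /= !lt0n !mxrank_eq0 andbT; apply/andP; split.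
    apply/eqP => Y0; apply: X0.
    have h : Y^T = 0 by rewrite Y0 trmx0.
    by rewrite /Y trmxK in h.
  apply/negP; rewrite subr_eq0 => /eqP Y1; apply: X1.
  have h : Y^T = 1%:M by rewrite -Y1 trmx1.
  by rewrite /Y trmxK in h.
- by rewrite /= addn0.
- move=> i a b hne.
  have colP : forall c, col c P = (row (cast_ord (esym hrr) c) Q)^T.
    by move=> c; apply/matrixP => x y; rewrite !mxE castmxE /= !mxE cast_ord_id.
  have rowQ : forall k : 'I_(r + r'),
      if (k < r)%N then row k Q = row k Q *m Y
      else row k Q = row k Q *m (1%:M - Y).
    move=> k; case: splitP => j hk.
      have -> : k = lshift r' j by apply/val_inj.
      rewrite rowKu; apply: idem_sub => //.
      by apply: submx_trans (row_sub _ _) _; rewrite eq_row_base submx_refl.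
    have -> : k = rshift r j by apply/val_inj.
    rewrite rowKd; apply: idem_sub => //.
    by apply: submx_trans (row_sub _ _) _; rewrite eq_row_base submx_refl.
  have XA : X^T *m A i = A i *m X.
    by rewrite -[A i in LHS]Asym -trmx_mul hc.
  rewrite (@entryE F n P (A i)) !colP trmxK.
  have := rowQ (cast_ord (esym hrr) a); have := rowQ (cast_ord (esym hrr) b).
  rewrite /=.
  set u := row (cast_ord (esym hrr) a) Q; set v := row (cast_ord (esym hrr) b) Q.
  have K1 : forall l (w : 'M_(n, l)), u *m Y *m A i *m (1%:M - Y)^T *m w = 0.
    move=> l w; rewrite -(mulmxA u) /Y XA linearB /= trmx1 trmxK.
    by rewrite -!mulmxA mulmxBl mul1mx mulmxBr (mulmxA X X) XX subrr !mulmx0.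
  have K2 : forall l (w : 'M_(n, l)), u *m (1%:M - Y) *m A i *m Y^T *m w = 0.
    move=> l w; rewrite /Y trmxK -(mulmxA u) mulmxBl mul1mx XA.
    by rewrite -!mulmxA mulmxBl -(mulmxA (A i) X) (mulmxA X X) XX subrr !mulmx0.
  have bo : forall k : 'I_n, block_of [:: r; r'] k = if (k < r)%N then 0%N else 1%N.
    move=> k; rewrite /block_of /= !addn0.
    have : (k < r + r')%N by rewrite hrr.
    by case: (k < r)%N => //= ->.
  move: hne; rewrite !bo.
  case: (a < r)%N; case: (b < r)%N => // _ hv hu.
  - by rewrite hu hv trmx_mul !mulmxA K1 mxE.
  - by rewrite hu hv trmx_mul !mulmxA K2 mxE.
Qed.

Theorem mainTheorem2 (F : fieldType) (n m : nat) (A : 'I_m -> 'M[F]_n) :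
  (2 \notin [pchar F])%N ->
  (forall i : 'I_m, (A i)^T = A i) ->
  ((~ exists (P : 'M[F]_n) (s : seq nat),
        [/\ P \in unitmx, (2 <= size s)%N, all (fun k => 0 < k)%N s,
            sumn s = n &
            forall i : 'I_m, block_diag_sizes s (P^T *m A i *m P)])
   <->
   (forall X : 'M[F]_n, in_center A X -> X *m X = X ->
      X = 0 \/ X = 1%:M)).
Proof.
move=> _ Asym; split.
- move=> nd X hc XX.
  have [->|X0] := eqVneq X 0; first by left.
  have [->|X1] := eqVneq X 1%:M; first by right.
  exfalso; apply: nd; apply: (@L1 F n m A Asym X hc XX); apply/eqP; [exact: X0 | exact: X1].
- move=> triv [P [s [Pu hs hpos hsum hblk]]].
  have [X [hc XX X0 X1]] := @L2 F n m A Asym P s Pu hs hpos hsum hblk.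
  by case: (triv X hc XX).
Qed.
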